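(* Let $E$ be a $KB$-space, let $\mathfrak{B}$ be a Boolean subalgebra of $\mathfrak{B}(E)$, let $\xi$ be a forward filtration in $\mathfrak{B}$ and let $T$ be a $\mathfrak{B}$-Volterra operator on $E$. Then $\hat{T}_{\xi}\colon\mathcal{M}_0(\xi)\to\mathcal{M}_0(\xi)$ induces a norm continuous operator $\hat{T}_{\xi}\colon\mathcal{M}_b(\xi)\to\mathcal{M}_b(\xi)$, and with $\iota_{\xi}\colon E\to\mathcal{M}_b(\xi)$, $\iota_\xi(x)=(\xi_nx)_{n\ge1}$, one has $\iota_\xi\circ T=\hat{T}_\xi\circ\iota_\xi$ and $\mathbf{s}\circ\hat{T}_\xi=\hat{T}_{L(\xi)}\circ\mathbf{s}$ as maps $\mathcal{M}_b(\xi)\to\mathcal{M}_b(L(\xi))$; all maps involved are norm continuous operators between Banach lattices.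
   Context: A $KB$-space is a Banach lattice in which every increasing norm bounded sequence is norm convergent (its norm is order continuous). $\mathfrak{B}(E)$ is the Boolean algebra of all order projections on $E$ ($\pi\le\rho$ iff $\pi\rho=\pi$, $\pi^*=I_E-\pi$, zero $\mathbf 0$, unit $\mathbf 1=I_E$). A positive operator $T$ is $\mathfrak{B}$-Volterra if for all $\pi\in\mathfrak{B}$, $x,y\in E$, $\pi x=\pi y$ implies $\pi Tx=\pi Ty$. A forward filtration in $\mathfrak{B}$ is a map $\xi\colon\{0,1,\dots,\infty\}\to\mathfrak{B}$ with $\xi_n\le\xi_{n+1}$, $\xi_0=\mathbf 0$, $\xi_\infty=\mathbf 1$; $L(\xi)_0=\xi_0$, $L(\xi)_n=\xi_{n+1}$ for $n\ge1$. $\mathcal{M}_0(\xi)$ is the set of sequences $(x_n)_{n\ge1}$ in $E$ with $\xi_nx_m=x_n$ for $m\ge n\ge1$; $\mathcal{M}_b(\xi)$ is the subset with $\sup_n\|x_n\|<\infty$, with coordinatewise order and norm $\sup_n\|x_n\|$. $\hat{T}_\xi((x_n))=(\xi_nTx_n)$, and $\mathbf{s}((x_n)_{n\ge1})=(x_{n+1})_{n\ge1}$. *)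

(* Defs.v *)
From HB Require Import structures.
From mathcomp Require Import all_boot all_order all_algebra.
From mathcomp Require Import all_classical all_reals all_analysis.
Set Implicit Arguments. Unset Strict Implicit. Unset Printing Implicit Defensive.
Import Order.TTheory GRing.Theory Num.Theory.
Import numFieldNormedType.Exports.
Local Open Scope classical_set_scope.
Local Open Scope ring_scope.

Section BL.
Variables (R : realType) (V : completeNormedModType R).
Variables (le : V -> V -> Prop) (join : V -> V -> V).

Definition vector_lattice : Prop :=
  (forall x, le x x) /\
  (forall x y, le x y -> le y x -> x = y) /\
  (forall x y z, le x y -> le y z -> le x z) /\
  (forall x y z, le x y -> le (x + z) (y + z)) /\
  (forall (a : R) x y, 0 <= a -> le x y -> le (a *: x) (a *: y)) /\
  (forall x y, [/\ le x (join x y), le y (join x y) &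
                  forall z, le x z -> le y z -> le (join x y) z]).

Definition absv (x : V) : V := join x (- x).

(** Banach lattice: complete (the type is a complete normed module) vector
    lattice with a lattice norm. *)
Definition banach_lattice : Prop :=
  vector_lattice /\ forall x y, le (absv x) (absv y) -> `|x| <= `|y|.

Definition KB_space : Prop :=
  banach_lattice /\
  forall u : nat -> V, (forall n, le (u n) (u n.+1)) ->
    (exists M : R, forall n, `|u n| <= M) -> exists l : V, u @ \oo --> l.

Definition linear_op (P : V -> V) : Prop :=
  forall (a : R) x y, P (a *: x + y) = a *: P x + P y.

Definition order_projection (P : V -> V) : Prop :=
  [/\ linear_op P, (forall x, P (P x) = P x) &
      forall x, le 0 x -> le 0 (P x) /\ le (P x) x].

Definition proj0 : V -> V := fun _ => 0.
Definition proj1 : V -> V := id.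
Definition projC (P : V -> V) : V -> V := fun x => x - P x.

(** Boolean subalgebra of B(E): meet is composition, complement is I - P. *)
Definition boolean_subalgebra (B : set (V -> V)) : Prop :=
  [/\ (forall P, B P -> order_projection P), B proj0, B proj1,
      (forall P Q, B P -> B Q -> B (P \o Q)) &
      (forall P, B P -> B (projC P))].

Definition positive_op (T : V -> V) : Prop :=
  linear_op T /\ forall x, le 0 x -> le 0 (T x).

Definition volterra (B : set (V -> V)) (T : V -> V) : Prop :=
  positive_op T /\
  forall P x y, B P -> P x = P y -> P (T x) = P (T y).

(** Forward filtration xi_0, xi_1, ... (xi_oo = 1 is implicit);
    xi_n <= xi_(n+1) means xi_n \o xi_(n+1) = xi_n. *)
Definition forward_filtration (B : set (V -> V)) (xi : nat -> V -> V) : Prop :=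
  [/\ forall n, B (xi n), xi 0%N = proj0 & forall n, xi n \o xi n.+1 = xi n].

Definition Lfilt (xi : nat -> V -> V) : nat -> V -> V :=
  fun n => if n == 0%N then xi 0%N else xi n.+1.

(** Sequences (x_n)_{n>=1} are encoded as x : nat -> V with x k = x_(k+1). *)
Definition M0 (xi : nat -> V -> V) (x : nat -> V) : Prop :=
  forall n m, (n <= m)%N -> xi n.+1 (x m) = x n.

Definition Mb (xi : nat -> V -> V) (x : nat -> V) : Prop :=
  M0 xi x /\ exists M : R, forall n, `|x n| <= M.

Definition That (xi : nat -> V -> V) (T : V -> V) (x : nat -> V) : nat -> V :=
  fun k => xi k.+1 (T (x k)).

Definition iota_xi (xi : nat -> V -> V) (v : V) : nat -> V := fun k => xi k.+1 v.

Definition shift_s (x : nat -> V) : nat -> V := fun k => x k.+1.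

Definition seq_continuous (A : set (nat -> V)) (F : (nat -> V) -> nat -> V) :=
  forall x, A x -> forall e : R, 0 < e -> exists2 d : R, 0 < d &
    forall y, A y -> (forall n, `|x n - y n| <= d) ->
      forall n, `|F x n - F y n| <= e.

Definition E_to_seq_continuous (F : V -> nat -> V) :=
  forall x (e : R), 0 < e -> exists2 d : R, 0 < d &
    forall y, `|x - y| <= d -> forall n, `|F x n - F y n| <= e.

(** A set of sequences is a Banach lattice for the coordinatewise order and
    sup norm: closed under the vector lattice operations and complete. *)
Definition seq_banach_lattice (A : set (nat -> V)) : Prop :=
  [/\ (forall (a : R) x y, A x -> A y -> A (fun n => a *: x n + y n)),
      (forall x y, A x -> A y -> A (fun n => join (x n) (y n))) &
      (forall u : nat -> nat -> V, (forall k, A (u k)) ->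
        (forall e : R, 0 < e -> exists N, forall i j, (N <= i)%N -> (N <= j)%N ->
            forall n, `|u i n - u j n| <= e) ->
        exists2 x, A x & forall e : R, 0 < e -> exists N, forall i, (N <= i)%N ->
            forall n, `|u i n - x n| <= e)].
End BL.
Arguments shift_s {R V} x _.
Arguments proj0 {R V} _.
Arguments proj1 {R V} _.

(* Main.v *)
Require Import Defs.
From HB Require Import structures.
From mathcomp Require Import all_boot all_order all_algebra.
From mathcomp Require Import all_classical all_reals all_analysis.
From mathcomp Require Import lra.
Import Order.TTheory GRing.Theory Num.Theory.
Import numFieldNormedType.Exports.
Local Open Scope classical_set_scope.
Local Open Scope ring_scope.
Set Implicit Arguments. Unset Strict Implicit. Unset Printing Implicit Defensive.

Section Lat.
Variables (R : realType) (V : completeNormedModType R).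
Variables (le : V -> V -> Prop) (join : V -> V -> V).
Hypothesis VL : vector_lattice le join.

Lemma vl_refl x : le x x. Proof. by case: VL => H _; apply: H. Qed.
Lemma vl_anti x y : le x y -> le y x -> x = y. Proof. by case: VL => _ [H _]; apply: H. Qed.
Lemma vl_trans y x z : le x y -> le y z -> le x z.
Proof. by case: VL => _ [_ [H _]]; apply: H. Qed.
Lemma vl_add x y z : le x y -> le (x + z) (y + z).
Proof. by case: VL => _ [_ [_ [H _]]]; apply: H. Qed.
Lemma vl_scale (a : R) x y : 0 <= a -> le x y -> le (a *: x) (a *: y).
Proof. by case: VL => _ [_ [_ [_ [H _]]]]; apply: H. Qed.
Lemma vl_jl x y : le x (join x y).
Proof. by case: VL => _ [_ [_ [_ [_ H]]]]; case: (H x y). Qed.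
Lemma vl_jr x y : le y (join x y).
Proof. by case: VL => _ [_ [_ [_ [_ H]]]]; case: (H x y). Qed.
Lemma vl_jlub x y z : le x z -> le y z -> le (join x y) z.
Proof. by case: VL => _ [_ [_ [_ [_ H]]]]; case: (H x y) => _ _; apply. Qed.

Lemma vl_addl x y z : le x y -> le (z + x) (z + y).
Proof. by rewrite ![z + _]addrC; apply: vl_add. Qed.
Lemma vl_add2 a b c d : le a b -> le c d -> le (a + c) (b + d).
Proof. by move=> h1 h2; apply: (vl_trans (vl_add c h1)); apply: vl_addl. Qed.
Lemma vl_sub x y : le x y -> le 0 (y - x).
Proof. by move=> h; have := vl_add (- x) h; rewrite subrr. Qed.
Lemma vl_subr x y : le 0 (y - x) -> le x y.
Proof. by move=> h; have := vl_add x h; rewrite add0r subrK. Qed.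
Lemma vl_opp x y : le x y -> le (- y) (- x).
Proof.
move=> h; have := vl_add (- x - y) h.
have -> : x + (- x - y) = - y by rewrite addrA subrr add0r.
by rewrite addrC subrK.
Qed.
Lemma vl_shift x y c : le (x + c) y -> le x (y - c).
Proof. by move=> h; have := vl_add (- c) h; rewrite addrK. Qed.
Lemma vl_jcomm x y : join x y = join y x.
Proof. by apply: vl_anti; apply: vl_jlub; rewrite ?vl_jl ?vl_jr; auto using vl_jl, vl_jr. Qed.
Lemma vl_jadd a b c : join a b + c = join (a + c) (b + c).
Proof.
apply: vl_anti; last first.
  by apply: vl_jlub; apply: vl_add; [apply: vl_jl | apply: vl_jr].
have h : le (join a b) (join (a + c) (b + c) - c).
  by apply: vl_jlub; apply: vl_shift; [apply: vl_jl | apply: vl_jr].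
by have := vl_add c h; rewrite subrK.
Qed.
Lemma vl_jmono a a' b : le a a' -> le (join a b) (join a' b).
Proof. by move=> h; apply: vl_jlub; [apply: (vl_trans h); apply: vl_jl | apply: vl_jr]. Qed.

Lemma abs_ge0 x : le 0 (absv join x).
Proof.
have h : le (x + - x) (absv join x + absv join x) by apply: vl_add2; [apply: vl_jl | apply: vl_jr].
rewrite subrr -mulr2n -scaler_nat in h.
have h2 : (0:R) <= 2^-1 by rewrite invr_ge0.
have := vl_scale h2 h.
by rewrite scaler0 scalerA mulVf ?scale1r // pnatr_eq0.
Qed.

Lemma abs_pos x : le 0 x -> absv join x = x.
Proof.
move=> h; apply: vl_anti; last by apply: vl_jl.
apply: vl_jlub; first by apply: vl_refl.
apply: (vl_trans (y := 0) _ h); by have := vl_opp h; rewrite oppr0.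
Qed.
Lemma abs_abs x : absv join (absv join x) = absv join x.
Proof. exact/abs_pos/abs_ge0. Qed.

Hypothesis Hn : forall x y, le (absv join x) (absv join y) -> `|x| <= `|y|.

Lemma normLe x y : le (absv join x) y -> `|x| <= `|y|.
Proof.
move=> h; have y0 : le 0 y := vl_trans (abs_ge0 x) h.
by apply: Hn; rewrite (abs_pos y0).
Qed.
Lemma norm_mono a b : le 0 a -> le a b -> `|a| <= `|b|.
Proof. by move=> a0 h; apply: normLe; rewrite abs_pos. Qed.
Lemma norm_absv x : `|absv join x| = `|x|.
Proof. by apply/eqP; rewrite eq_le !Hn // abs_abs; apply: vl_refl. Qed.

Lemma lin_add (P : V -> V) : linear_op P -> forall x y, P (x + y) = P x + P y.
Proof. by move=> HP x y; rewrite -[x in LHS]scale1r HP scale1r. Qed.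
Lemma lin0 (P : V -> V) : linear_op P -> P 0 = 0.
Proof.
move=> HP; have := lin_add HP 0 0; rewrite addr0 -{1}[P 0]add0r.
by move/addIr.
Qed.
Lemma linN (P : V -> V) x : linear_op P -> P (- x) = - P x.
Proof. by move=> HP; rewrite -[- x]addr0 -scaleN1r HP lin0 // addr0 scaleN1r. Qed.
Lemma linB (P : V -> V) x y : linear_op P -> P (x - y) = P x - P y.
Proof. by move=> HP; rewrite lin_add // linN. Qed.
Lemma linZ (P : V -> V) a x : linear_op P -> P (a *: x) = a *: P x.
Proof. by move=> HP; rewrite -[a *: x]addr0 HP lin0 // addr0. Qed.

Lemma pos_mono (P : V -> V) x y : positive_op le P -> le x y -> le (P x) (P y).
Proof. by case=> HP Hpos h; apply: vl_subr; rewrite -linB //; apply/Hpos/vl_sub. Qed.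
Lemma pos_abs (P : V -> V) x : positive_op le P -> le (absv join (P x)) (P (absv join x)).
Proof.
move=> HP; apply: vl_jlub; first by apply: pos_mono => //; apply: vl_jl.
by rewrite -linN; [apply: pos_mono => //; apply: vl_jr | case: HP].
Qed.
Lemma pos_norm (P : V -> V) x : positive_op le P -> `|P x| <= `|P (absv join x)|.
Proof. by move=> HP; apply/normLe/pos_abs. Qed.

Lemma proj_pos (P : V -> V) : order_projection le P -> positive_op le P.
Proof. by case=> HP _ H; split => // x /H []. Qed.
Lemma proj_le (P : V -> V) x : order_projection le P -> le 0 x -> le (P x) x.
Proof. by case=> HP _ H /H []. Qed.
Lemma proj_abs (P : V -> V) x : order_projection le P -> le (absv join (P x)) (absv join x).
Proof.
move=> HP; apply: (vl_trans (pos_abs _ (proj_pos HP))).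
by apply: proj_le => //; apply: abs_ge0.
Qed.
Lemma proj_norm (P : V -> V) x : order_projection le P -> `|P x| <= `|x|.
Proof. by move=> HP; rewrite -[`|x|]norm_absv; apply: normLe; apply: proj_abs. Qed.

Definition pp x := join x 0.
Definition nn x := join (- x) 0.
Lemma pp_nn x : pp x - nn x = x.
Proof.
have h : pp x - x = nn x by rewrite /pp vl_jadd subrr add0r vl_jcomm.
by rewrite -h opprB addrC subrK.
Qed.
Lemma pp_ge0 x : le 0 (pp x). Proof. exact: vl_jr. Qed.
Lemma nn_ge0 x : le 0 (nn x). Proof. exact: vl_jr. Qed.

Definition disj u v := forall z, le 0 z -> le z u -> le z v -> z = 0.

Lemma disj_pp u v : le 0 u -> le 0 v -> disj u v -> join (u - v) 0 = u.
Proof.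
move=> u0 v0 d; set w := join (u - v) 0.
have w0 : le 0 w by apply: vl_jr.
have le_uw : forall t, le 0 t -> le (u - t) u.
  by move=> t t0; have := vl_addl (u - t) t0; rewrite addr0 subrK.
have wu : le w u by apply: vl_jlub => //; apply: le_uw.
have z0 : le 0 (u - w) by apply: vl_sub.
have zu : le (u - w) u by apply: le_uw.
have zv : le (u - w) v.
  have h1 : le u (w + v) by have := vl_add v (vl_jl (u - v) 0); rewrite subrK.
  by have := vl_add (- w) h1; rewrite (addrC w) addrK.
by have := d _ z0 zu zv => /subr0_eq ->.
Qed.

Lemma disj_ppnn x : disj (pp x) (nn x).
Proof.
move=> z z0 zp zn.
have h1 : le (z + x) (pp x).
  by have := vl_add x zn; rewrite /nn vl_jadd addNr add0r vl_jcomm.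
have h2 : le x (pp x - z) by apply: vl_shift; rewrite addrC.
have h3 : le 0 (pp x - z) by apply: vl_sub.
have h4 : le (pp x) (pp x - z) by apply: vl_jlub.
have := vl_sub h4; rewrite addrAC subrr add0r => /vl_opp; rewrite opprK oppr0 => h5.
by apply: vl_anti.
Qed.

Lemma proj_pp (P : V -> V) x : order_projection le P -> P (pp x) = pp (P x).
Proof.
move=> HP; have Hl : linear_op P by case: HP.
have Hp := proj_pos HP.
have u0 : le 0 (P (pp x)) by case: Hp => _; apply; apply: pp_ge0.
have v0 : le 0 (P (nn x)) by case: Hp => _; apply; apply: nn_ge0.
have d : disj (P (pp x)) (P (nn x)).
  move=> z z0 zu zv; apply: (disj_ppnn z0).
    by apply: (vl_trans zu); apply: proj_le => //; apply: pp_ge0.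
  by apply: (vl_trans zv); apply: proj_le => //; apply: nn_ge0.
by rewrite -{2}(pp_nn x) linB // /pp disj_pp.
Qed.

Lemma proj_join (P : V -> V) a b : order_projection le P -> P (join a b) = join (P a) (P b).
Proof.
move=> HP; have Hl : linear_op P by case: HP.
have e : forall c d : V, join c d = pp (c - d) + d.
  by move=> c d; rewrite /pp vl_jadd subrK add0r.
by rewrite e lin_add // proj_pp // linB // -e.
Qed.

Lemma norm_join a b : `|join a b| <= `|a| + `|b|.
Proof.
have h : le (absv join (join a b)) (absv join a + absv join b).
  have ha : le (absv join a) (absv join a + absv join b).
    by have := vl_addl (absv join a) (abs_ge0 b); rewrite addr0.
  have hb : le (absv join b) (absv join a + absv join b).
    by have := vl_add (absv join b) (abs_ge0 a); rewrite add0r.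
  apply: vl_jlub.
    by apply: vl_jlub; [apply: (vl_trans _ ha); apply: vl_jl | apply: (vl_trans _ hb); apply: vl_jl].
  apply: (vl_trans (vl_opp (vl_jl a b))); apply: (vl_trans _ ha); apply: vl_jr.
apply: (le_trans (normLe h)); apply: (le_trans (ler_normD _ _)).
by rewrite !norm_absv.
Qed.

Lemma closed_cone (u : nat -> V) (l c : V) N : u @ \oo --> l ->
  (forall n, (N <= n)%N -> le c (u n)) -> le c l.
Proof.
move=> /cvgrPdist_le cu hc; set w := l - c.
have nw : `|nn w| <= 0.
  apply/ler_addgt0Pr => e e0; rewrite add0r.
  have [M _ HM] := cu e e0.
  set n := maxn N M.
  have d0 : le 0 (u n - c) by apply/vl_sub/hc; rewrite leq_maxl.
  have h1 : le (nn w) (absv join (u n - c - w)).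
    apply: (vl_trans (vl_jmono 0 (_ : le (- w) (u n - c - w)))).
      by have := vl_add (- w) d0; rewrite add0r.
    by apply: vl_jlub; [apply: vl_jl | apply: abs_ge0].
  have := norm_mono (nn_ge0 w) h1; rewrite norm_absv => h2.
  apply: (le_trans h2).
  have -> : u n - c - w = - (l - u n) by rewrite /w opprB addrA subrK opprB.
  by rewrite normrN; apply: HM; rewrite /= leq_maxr.
have : nn w = 0 by apply/normr0_eq0/eqP; rewrite eq_le nw normr_ge0.
move=> h; apply: vl_subr; rewrite -/w -(pp_nn w) h subr0; apply: pp_ge0.
Qed.

Fixpoint psum (x : nat -> V) (n : nat) : V :=
  match n with 0%N => 0 | k.+1 => psum x k + x k end.

Hypothesis Hkb : forall u : nat -> V, (forall n, le (u n) (u n.+1)) ->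
    (exists M : R, forall n, `|u n| <= M) -> exists l : V, u @ \oo --> l.

Lemma pos_bounded (T : V -> V) : positive_op le T ->
  exists2 C : R, 0 < C & forall x, `|T x| <= C * `|x|.
Proof.
move=> HT; have Tl : linear_op T by case: HT.
case: (pselect (exists2 C : R, 0 < C & forall x, `|T x| <= C * `|x|)) => // nC.
exfalso.
have Hex : forall n : nat, exists y, [/\ le 0 y, `|y| <= (2^-1)^+n & n%:R <= `|T y|].
  move=> n; set q : R := (2^-1)^+n.
  have q0 : 0 < q by rewrite exprn_gt0 // invr_gt0.
  set C := n%:R / q + 1.
  have C0 : 0 < C by rewrite ltr_wpDl // divr_ge0 // ltW.
  have [x Hx] : exists x, C * `|x| < `|T x|.
    apply: contrapT => H; apply: nC; exists C => // x.
    by rewrite leNgt; apply/negP => h; apply: H; exists x.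
  set y0 := absv join x.
  have y00 : le 0 y0 by apply: abs_ge0.
  have Hy0 : C * `|y0| < `|T y0|.
    by rewrite /y0 norm_absv; apply: (lt_le_trans Hx); apply: pos_norm.
  have ny : 0 < `|y0|.
    rewrite lt_neqAle normr_ge0 andbT; apply/negP => /eqP h0.
    move: Hy0; rewrite -h0 mulr0 (normr0_eq0 (esym h0)) lin0 // normr0.
    by rewrite ltxx.
  set s := q / `|y0|.
  have s0 : 0 < s by rewrite divr_gt0.
  exists (s *: y0); split.
  - by have := vl_scale (ltW s0) y00; rewrite scaler0.
  - by rewrite normrZ gtr0_norm // /s divfK // gt_eqF.
  - rewrite linZ // normrZ gtr0_norm //.
    have : s * (C * `|y0|) <= s * `|T y0| by rewrite ler_pM2l // ltW.
    apply: le_trans.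
    rewrite mulrCA /s divfK ?gt_eqF // /C mulrDl divfK ?gt_eqF // mul1r.
    by rewrite lerDl ltW.
have [x Hx] := choice Hex.
have x0 : forall n, le 0 (x n) by move=> n; case: (Hx n).
set S := psum x.
have Sinc : forall n, le (S n) (S n.+1).
  by move=> n; rewrite /S /=; have := vl_addl (psum x n) (x0 n); rewrite addr0.
have Sge0 : forall n, le 0 (S n).
  elim=> [|n IH]; first by apply: vl_refl.
  exact: vl_trans IH (Sinc n).
have Smono : forall n m, (n <= m)%N -> le (S n) (S m).
  move=> n; elim=> [|m IH].
    by rewrite leqn0 => /eqP ->; apply: vl_refl.
  rewrite leq_eqVlt => /orP [/eqP -> | ]; first by apply: vl_refl.
  by rewrite ltnS => /IH h; apply: vl_trans h (Sinc m).
have Sbd : forall n, `|S n| <= 2 - 2 * (2^-1)^+n.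
  elim=> [|n IH]; first by rewrite /S /= normr0 expr0 mulr1 subrr.
  rewrite /S /=; apply: (le_trans (ler_normD _ _)).
  have hx : `|x n| <= (2^-1)^+n by case: (Hx n).
  apply: (le_trans (lerD IH hx)).
  rewrite exprS mulrA divff ?pnatr_eq0 // mul1r.
  set q := 2^-1 ^+ n; lra.
have [l Hl] : exists l : V, S @ \oo --> l.
  apply: Hkb => //; exists 2 => n; apply: (le_trans (Sbd n)).
  by rewrite gerBl mulr_ge0 // exprn_ge0 // invr_ge0.
have xl : forall n, le (x n) l.
  move=> n; apply: (closed_cone Hl (N := n.+1)) => m hm.
  apply: vl_trans (Smono _ _ hm); rewrite /S /=.
  by have := vl_add (x n) (Sge0 n); rewrite add0r.
have Tb : forall n, n%:R <= `|T l|.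
  move=> n; case: (Hx n) => _ _ h; apply: (le_trans h).
  have Hp : forall v, le 0 v -> le 0 (T v) by case: HT.
  by apply: norm_mono; [apply: Hp | apply: pos_mono].
have := archi_boundP (normr_ge0 (T l)).
by rewrite ltNge Tb.
Qed.

End Lat.

Lemma seq_cauchy_cvg (R : realType) (V : completeNormedModType R) (u : nat -> V) :
  (forall e : R, 0 < e -> exists N, forall i j, (N <= i)%N -> (N <= j)%N -> `|u i - u j| <= e) ->
  exists l : V, u @ \oo --> l.
Proof.
move=> H; suff : cvg (u @ \oo) by move/cvg_ex.
apply: cauchy_cvg; apply/cauchyP => e e0.
have [N HN] := H (e / 2) (divr_gt0 e0 (ltr0Sn _ 1)).
exists (u N); exists N => // n /= Nn.
rewrite -ball_normE /=.
apply: (le_lt_trans (HN N n (leqnn N) Nn)).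
by rewrite ltr_pdivrMr // ltr_pMr // ltr1n.
Qed.

Lemma cvg_seqP (R : realType) (V : completeNormedModType R) (u : nat -> V) (l : V) :
  u @ \oo --> l -> forall e : R, 0 < e -> exists N, forall n, (N <= n)%N -> `|l - u n| <= e.
Proof.
move=> /cvgrPdist_le H e e0; have [N _ HN] := H e e0.
by exists N => n Nn; apply: HN.
Qed.

Section Filt.
Variables (R : realType) (V : completeNormedModType R).
Variables (le : V -> V -> Prop) (join : V -> V -> V).
Hypothesis VL : vector_lattice le join.
Hypothesis Hn : forall x y, le (absv join x) (absv join y) -> `|x| <= `|y|.
Variable B : set (V -> V).
Hypothesis HB : boolean_subalgebra le B.

Lemma B_proj (P : V -> V) : B P -> order_projection le P.
Proof. by case: HB => H _ _ _ _; apply: H. Qed.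

Lemma filt_comp (p : nat -> V -> V) : forward_filtration B p ->
  forall n m, (n <= m)%N -> forall v, p n (p m v) = p n v.
Proof.
move=> [Hb _ Hc] n; elim=> [|m IH].
  by rewrite leqn0 => /eqP -> v; case: (B_proj (Hb 0%N)).
rewrite leq_eqVlt => /orP [/eqP -> v | ]; first by case: (B_proj (Hb m.+1)).
rewrite ltnS => /IH h v.
have e := congr1 (fun f => f v) (Hc m); rewrite /= in e.
by rewrite -(h (p m.+1 v)) e h.
Qed.

Lemma Lfilt_ff (xi : nat -> V -> V) : forward_filtration B xi -> forward_filtration B (Lfilt xi).
Proof.
move=> Hf; have [Hb H0 Hc] := Hf; split.
- by case=> [|n]; rewrite /Lfilt /=; apply: Hb.
- by rewrite /Lfilt.
- case=> [|n]; apply: funext => v; rewrite /Lfilt /=.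
  + exact: (filt_comp Hf (n:=0) (m:=2) _ v).
  + exact: (congr1 (fun f => f v) (Hc n.+2)).
Qed.

Variable T : V -> V.
Hypothesis HV : volterra le B T.
Variable C : R.
Hypothesis C0 : 0 < C.
Hypothesis HC : forall x, `|T x| <= C * `|x|.

Lemma That_M0 (p : nat -> V -> V) : forward_filtration B p ->
  forall x, M0 p x -> M0 p (That p T x).
Proof.
move=> Hf x Hx n m nm; have [Hb _ _] := Hf.
rewrite /That filt_comp //.

case: HV => _ HV2; apply: HV2; first exact: Hb.
have e := Hx n m nm; rewrite -e.
by case: (B_proj (Hb n.+1)) => _ idem _; rewrite idem.
Qed.

Lemma That_Mb (p : nat -> V -> V) : forward_filtration B p ->
  forall x, Mb p x -> Mb p (That p T x).
Proof.
move=> Hf x [Hx [M HM]]; have [Hb _ _] := Hf; split; first exact: That_M0.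
exists (C * M) => n; rewrite /That.
apply: le_trans (proj_norm VL Hn _ (B_proj (Hb _))) _.
apply: le_trans (HC _) _; by rewrite ler_wpM2l // ltW.
Qed.

Lemma That_cont (p : nat -> V -> V) : forward_filtration B p ->
  seq_continuous (Mb p) (That p T).
Proof.
move=> Hf x _ e e0; have [Hb _ _] := Hf.
exists (e / C); first by rewrite divr_gt0.
move=> y _ hxy n; rewrite /That.
have [Pl _ _] := B_proj (Hb n.+1).
have Tl : linear_op T by case: HV => [[]].
rewrite -linB // -linB //.
apply: le_trans (proj_norm VL Hn _ (B_proj (Hb _))) _.
apply: le_trans (HC _) _.
apply: le_trans (ler_wpM2l (ltW C0) (hxy n)) _.
by rewrite mulrC divfK ?gt_eqF.
Qed.

End Filt.

Lemma seq_bl (R : realType) (V : completeNormedModType R)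
  (le : V -> V -> Prop) (join : V -> V -> V) (p : nat -> V -> V) :
  vector_lattice le join ->
  (forall x y, le (absv join x) (absv join y) -> `|x| <= `|y|) ->
  (forall n, order_projection le (p n)) -> seq_banach_lattice join (Mb p).
Proof.
move=> VL Hn Hp; split.
- move=> a x y [Mx [bx Hbx]] [My [by' Hby]]; split.
    by move=> n m nm; case: (Hp n.+1) => Hl _ _; rewrite Hl Mx // My.
  exists (`|a| * bx + by') => n; apply: le_trans (ler_normD _ _) _.
  by rewrite normrZ; apply: lerD => //; apply: ler_wpM2l.
- move=> x y [Mx [bx Hbx]] [My [by' Hby]]; split.
    by move=> n m nm; rewrite (proj_join VL) // Mx // My.
  exists (bx + by') => n; apply: le_trans (norm_join VL Hn _ _) _.
  exact: lerD.
- move=> u Hu Hc.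
  have cvn : forall n, exists l : V, (fun k => u k n) @ \oo --> l.
    move=> n; apply: seq_cauchy_cvg => e e0; have [N HN] := Hc e e0.
    by exists N => i j hi hj; apply: HN.
  have [x Hx] := choice cvn.
  have E : forall e : R, 0 < e -> exists N, forall i, (N <= i)%N -> forall n, `|u i n - x n| <= e.
    move=> e e0; have e20 : 0 < e / 2 by rewrite divr_gt0.
    have [N HN] := Hc _ e20; exists N => i hi n.
    have [M HM] := cvg_seqP (Hx n) e20.
    set j := maxn N M.
    apply: le_trans (ler_distD (u j n) _ _) _.
    rewrite [e]splitr; apply: lerD; first by apply: HN => //; rewrite leq_maxl.
    by rewrite distrC; apply: HM; rewrite leq_maxr.
  exists x => //; split.
  + move=> n m nm; apply/eqP; rewrite -subr_eq0 -normr_le0.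
    apply/ler_addgt0Pr => e e0; rewrite add0r.
    have e20 : 0 < e / 2 by rewrite divr_gt0.
    have [N HN] := E _ e20; case: (Hu N) => HM _.
    have [Pl _ _] := Hp n.+1.
    have -> : p n.+1 (x m) - x n = p n.+1 (x m - u N m) + (u N n - x n).
      by rewrite (linB (P := p n.+1)) // HM // addrA subrK.
    apply: le_trans (ler_normD _ _) _; rewrite [e]splitr; apply: lerD.
      apply: le_trans (proj_norm VL Hn _ (Hp _)) _.
      by rewrite distrC; apply: HN.
    by apply: HN.
  + have [N HN] := E 1 ltr01; case: (Hu N) => _ [M HM]; exists (M + 1) => n.
    have -> : x n = u N n - (u N n - x n) by rewrite opprB addrC subrK.
    apply: le_trans (ler_normB _ _) _; apply: lerD => //; exact: HN.
Qed.

Theorem theorem4p6 (R : realType) (V : completeNormedModType R)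
    (le : V -> V -> Prop) (join : V -> V -> V)
    (B : set (V -> V)) (xi : nat -> V -> V) (T : V -> V) :
  KB_space le join ->
  boolean_subalgebra le B ->
  forward_filtration B xi ->
  volterra le B T ->
  (forall x, M0 xi x -> M0 xi (That xi T x)) /\
      (forall x, Mb xi x -> Mb xi (That xi T x)) /\
      seq_continuous (Mb xi) (That xi T) /\
      (forall x, Mb (Lfilt xi) x -> Mb (Lfilt xi) (That (Lfilt xi) T x)) /\
      seq_continuous (Mb (Lfilt xi)) (That (Lfilt xi) T) /\
      (forall v, Mb xi (iota_xi xi v)) /\
      E_to_seq_continuous (iota_xi xi) /\
      (forall v, iota_xi xi (T v) = That xi T (iota_xi xi v)) /\
      (forall x, Mb xi x -> Mb (Lfilt xi) (shift_s x)) /\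
      seq_continuous (Mb xi) shift_s /\
      (forall x, Mb xi x -> shift_s (That xi T x) = That (Lfilt xi) T (shift_s x)) /\
      seq_banach_lattice join (Mb xi) /\
      seq_banach_lattice join (Mb (Lfilt xi)).
Proof.
move=> [[VL Hn] Hkb] HB Hf HV.
have Tpos : positive_op le T by case: HV.
have [C C0 HC] := pos_bounded VL Hn Hkb Tpos.
have HfL := Lfilt_ff HB Hf.
have [Hb H0 Hc] := Hf.
have Pn : forall n, order_projection le (xi n) by move=> n; apply: (B_proj HB (Hb n)).
have PnL : forall n, order_projection le (Lfilt xi n).
  by move=> n; case: HfL => HbL _ _; apply: (B_proj HB (HbL n)).
split; first by move=> x; apply: (That_M0 HB HV Hf).
split; first by move=> x; apply: (That_Mb VL Hn HB HV C0 HC Hf).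
split; first exact: (That_cont VL Hn HB HV C0 HC Hf).
split; first by move=> x; apply: (That_Mb VL Hn HB HV C0 HC HfL).
split; first exact: (That_cont VL Hn HB HV C0 HC HfL).
split.
  move=> v; split; first by move=> n m nm; rewrite /iota_xi (filt_comp HB Hf).
  by exists `|v| => n; exact: (proj_norm VL Hn _ (Pn _)).
split.
  move=> x e e0; exists e => // y hxy n; rewrite /iota_xi.
  have [Pl _ _] := Pn n.+1; rewrite -linB //.
  by apply: le_trans (proj_norm VL Hn _ (Pn _)) _.
split.
  move=> v; apply: funext => k; rewrite /iota_xi /That.
  case: HV => _ HV2; apply: HV2 => //.
  by case: (Pn k.+1) => _ idem _; rewrite idem.
split.
  move=> x [Mx [M HM]]; split; last by exists M => n; apply: HM.
  by move=> n m nm; rewrite /shift_s /Lfilt /=; apply: Mx.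
split.
  by move=> x _ e e0; exists e => // y _ hxy n; exact: hxy.
split.
  by move=> x _; apply: funext => k; rewrite /shift_s /That /Lfilt.
by split; apply: (seq_bl VL Hn).
Qed.
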